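(* Let $m\ge1$, $0<\lambda_1\le\dots\le\lambda_m$, $0<\Lambda_0\le\Lambda_1$, and let $a,b$ be positive definite (symmetric) $m\times m$ matrices with $\Lambda_0I\le a,b\le\Lambda_1I$. Set $\theta=\Lambda_0^{-1}m\|a-b\|_s$. Then for all $t>0$, $$\Big|\frac{\det\widetilde b(t)}{\det\widetilde a(t)}-1\Big|\le\theta e^\theta.$$
   Context: $a(t)$ has entries $a_{ij}(1-e^{-(\lambda_i+\lambda_j)t})/(\lambda_i+\lambda_j)$; $g(t)$ is diagonal with $g_{ii}(t)=(1-e^{-2\lambda_it})/(2\lambda_i)$, $G(t)=g(t)^{-1}$; $\widetilde a(t)=G(t)^{1/2}a(t)G(t)^{1/2}$, and $\widetilde b(t)$ analogously from $b$. $\|c\|_s=\max\{\sup_i\sum_j|c_{ij}|,\sup_j\sum_i|c_{ij}|\}$. *)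

(* Defs.v *)
From HB Require Import structures.
From mathcomp Require Import all_boot all_order all_algebra.
From mathcomp Require Import all_classical all_reals all_analysis.
Set Implicit Arguments. Unset Strict Implicit. Unset Printing Implicit Defensive.
Import Order.TTheory GRing.Theory Num.Theory.
Local Open Scope ring_scope.

Definition mx_t (R : realType) (m : nat) (lam : 'I_m -> R) (a : 'M[R]_m) (t : R)
  : 'M[R]_m :=
  \matrix_(i, j) (a i j * (1 - expR (- ((lam i + lam j) * t))) / (lam i + lam j)).

Definition g_t (R : realType) (m : nat) (lam : 'I_m -> R) (t : R) : 'M[R]_m :=
  diag_mx (\row_i ((1 - expR (- (2 * lam i * t))) / (2 * lam i))).

Definition G_t (R : realType) (m : nat) (lam : 'I_m -> R) (t : R) : 'M[R]_m :=
  invmx (g_t lam t).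

(* G(t)^{1/2}: G(t) is diagonal with positive entries; entrywise square root
   of the diagonal. *)
Definition G_t_sqrt (R : realType) (m : nat) (lam : 'I_m -> R) (t : R) : 'M[R]_m :=
  diag_mx (\row_i Num.sqrt (G_t lam t i i)).

Definition mx_tilde (R : realType) (m : nat) (lam : 'I_m -> R) (c : 'M[R]_m) (t : R)
  : 'M[R]_m :=
  G_t_sqrt lam t *m mx_t lam c t *m G_t_sqrt lam t.

Definition norm_s (R : realType) (m : nat) (c : 'M[R]_m) : R :=
  Num.max (\big[Num.max/0]_(i < m) \sum_(j < m) `|c i j|)
          (\big[Num.max/0]_(j < m) \sum_(i < m) `|c i j|).

Definition loewner_le (R : realType) (m : nat) (A B : 'M[R]_m) : Prop :=
  forall x : 'rV[R]_m, 0 <= (x *m (B - A) *m x^T) 0 0.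

(* Main.v *)
Require Import Defs.
From HB Require Import structures.
From mathcomp Require Import all_boot all_order all_algebra.
From mathcomp Require Import all_classical all_reals all_analysis.
From mathcomp Require Import complex.
From mathcomp Require Import ring lra.
Import Order.TTheory GRing.Theory Num.Theory.
Set Implicit Arguments. Unset Strict Implicit. Unset Printing Implicit Defensive.
Local Open Scope classical_set_scope.
Local Open Scope ring_scope.

Section Core.
Variable R : realType.

Lemma qfE k (y : 'rV[R]_k) (M : 'M[R]_k) :
  (y *m M *m y^T) 0 0 = \sum_i \sum_j y 0 i * M i j * y 0 j.
Proof.
rewrite mxE; under eq_bigr do rewrite mxE mulr_suml.
rewrite exchange_big /=; apply: eq_bigr => i _; apply: eq_bigr => j _.
by rewrite !mxE.
Qed.

Lemma nqE k (y : 'rV[R]_k) : (y *m y^T) 0 0 = \sum_i y 0 i ^+ 2.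
Proof. by rewrite mxE; apply: eq_bigr => i _; rewrite !mxE expr2. Qed.

Definition posq k (c : R) (S : 'M[R]_k) :=
  forall y : 'rV[R]_k, c * (y *m y^T) 0 0 <= (y *m S *m y^T) 0 0.

Lemma nq_ge0 k (y : 'rV[R]_k) : 0 <= (y *m y^T) 0 0.
Proof. by rewrite nqE sumr_ge0 // => i _; exact: sqr_ge0. Qed.

Lemma nq_gt0 k (y : 'rV[R]_k) : y != 0 -> 0 < (y *m y^T) 0 0.
Proof.
move=> yn0; rewrite nqE.
case: (pickP (fun j => y 0 j != 0)) => [j yj | H]; last first.
  move/eqP: yn0; case; apply/rowP => j; rewrite mxE; apply/eqP.
  by move: (H j) => /= /negbFE.
rewrite (bigD1 j) //=; apply: (lt_le_trans (_ : 0 < y 0 j ^+ 2)).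
  by rewrite exprn_even_gt0 // yj orbT.
by rewrite lerDl sumr_ge0 // => i _; exact: sqr_ge0.
Qed.

Lemma posq_unit k c (S : 'M[R]_k) : 0 < c -> posq c S -> S \in unitmx.
Proof.
move=> c0 HS; rewrite unitmxE unitfE; apply/negP => /det0P [v vn0 vS].
have := HS v; rewrite vS mul0mx [X in _ <= X]mxE.
by rewrite leNgt mulr_gt0 // nq_gt0.
Qed.

Lemma posq_inv_bound k c (S : 'M[R]_k) : 0 < c -> posq c S ->
  forall i j, `|invmx S i j| <= c^-1.
Proof.
move=> c0 HS i j.
have Su := posq_unit c0 HS.
pose y := row i (invmx S).
have yS : y *m S = row i 1%:M by rewrite -row_mul mulVmx.
have := HS y; rewrite yS.
have -> : (row i 1%:M *m y^T) 0 0 = y 0 i.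
  rewrite mxE (bigD1 i) //= big1 => [|l /negbTE li]; last by rewrite !mxE eq_sym li mul0r.
  by rewrite !mxE eqxx mul1r addr0.
rewrite nqE => H.
have Hj l : c * y 0 l ^+ 2 <= y 0 i.
  apply: le_trans H; rewrite ler_pM2l // (bigD1 l) //= lerDl.
  by rewrite sumr_ge0 // => ? _; exact: sqr_ge0.
have yij : y 0 j = invmx S i j by rewrite mxE.
rewrite -yij.
have Hi := Hj i; have Hjj := Hj j.
have yi0 : 0 <= y 0 i by apply: le_trans Hi; apply: mulr_ge0; [exact: ltW | exact: sqr_ge0].
have yi1 : y 0 i <= c^-1.
  have [->|yip] := eqVneq (y 0 i) 0; first by rewrite invr_ge0 ltW.
  have yp : 0 < y 0 i by rewrite lt_neqAle eq_sym yip.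
  by rewrite -(ler_pM2l c0) mulfV ?gt_eqF // -(ler_pM2r yp) mul1r -mulrA -expr2.
have : y 0 j ^+ 2 <= c^-1 ^+ 2.
  rewrite -(ler_pM2l c0) [c^-1 ^+ 2]expr2 [X in _ <= X]mulrA mulfV ?gt_eqF // mul1r.
  exact: le_trans Hjj yi1.
have ci : 0 <= c^-1 by rewrite invr_ge0 ltW.
by rewrite -ler_sqrt ?sqrtr_sqr ?(ger0_norm ci) // sqr_ge0.
Qed.

Lemma trace_bound k c (A D : 'M[R]_k) : 0 < c -> posq c A ->
  `|\tr (invmx A *m D)| <= c^-1 * \sum_i \sum_j `|D i j|.
Proof.
move=> c0 HA; rewrite /mxtrace; apply: (le_trans (ler_norm_sum _ _ _)).
rewrite [\sum_i \sum_j `|D i j|]exchange_big mulr_sumr; apply: ler_sum => i _.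
rewrite mxE; apply: (le_trans (ler_norm_sum _ _ _)); rewrite mulr_sumr.
apply: ler_sum => j _.
by rewrite normrM ler_wpM2r // posq_inv_bound.
Qed.

Local Notation toC := (real_complex R).

Lemma ReD (x y : R[i]) : complex.Re (x + y) = complex.Re x + complex.Re y. Proof. by case: x => a b; case: y => c d. Qed.
Lemma ImD (x y : R[i]) : complex.Im (x + y) = complex.Im x + complex.Im y. Proof. by case: x => a b; case: y => c d. Qed.
Lemma ReM (x y : R[i]) : complex.Re (x * y) = complex.Re x * complex.Re y - complex.Im x * complex.Im y.
Proof. by case: x => a b; case: y => c d. Qed.
Lemma ImM (x y : R[i]) : complex.Im (x * y) = complex.Re x * complex.Im y + complex.Im x * complex.Re y.
Proof. by case: x => a b; case: y => c d. Qed.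
Lemma Re_sum I (r : seq I) (P : pred I) (F : I -> R[i]) :
  complex.Re (\sum_(i <- r | P i) F i) = \sum_(i <- r | P i) complex.Re (F i).
Proof. exact: (big_morph _ ReD). Qed.
Lemma Im_sum I (r : seq I) (P : pred I) (F : I -> R[i]) :
  complex.Im (\sum_(i <- r | P i) F i) = \sum_(i <- r | P i) complex.Im (F i).
Proof. exact: (big_morph _ ImD). Qed.

Lemma ReMc k l (w : 'rV[R[i]]_k) (S : 'M[R]_(k, l)) :
  map_mx (@complex.Re R) (w *m map_mx toC S) = map_mx (@complex.Re R) w *m S.
Proof.
apply/rowP => j; rewrite !mxE Re_sum; apply: eq_bigr => i _.
by rewrite !mxE ReM /= mulr0 subr0.
Qed.

Lemma ImMc k l (w : 'rV[R[i]]_k) (S : 'M[R]_(k, l)) :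
  map_mx (@complex.Im R) (w *m map_mx toC S) = map_mx (@complex.Im R) w *m S.
Proof.
apply/rowP => j; rewrite !mxE Im_sum; apply: eq_bigr => i _.
by rewrite !mxE ImM /= mulr0 add0r.
Qed.

Lemma ReZ k (mu : R[i]) (u : 'rV[R[i]]_k) :
  map_mx (@complex.Re R) (mu *: u) = complex.Re mu *: map_mx (@complex.Re R) u - complex.Im mu *: map_mx (@complex.Im R) u.
Proof. by apply/rowP => j; rewrite !mxE ReM. Qed.

Lemma ImZ k (mu : R[i]) (u : 'rV[R[i]]_k) :
  map_mx (@complex.Im R) (mu *: u) = complex.Re mu *: map_mx (@complex.Im R) u + complex.Im mu *: map_mx (@complex.Re R) u.
Proof. by apply/rowP => j; rewrite !mxE ImM. Qed.

Definition q2 k (S : 'M[R]_k) (U V : 'rV[R]_k) := (U *m S *m V^T) 0 0.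

Lemma q2_sym k (S : 'M[R]_k) U V : S^T = S -> q2 S U V = q2 S V U.
Proof.
move=> ST; rewrite /q2 -[in LHS](trmxK (U *m S *m V^T)) [in LHS]mxE.
by rewrite !trmx_mul trmxK ST mulmxA.
Qed.

Lemma eig_pos k c (A B : 'M[R]_k) (mu : R[i]) : 0 < c ->
  A^T = A -> B^T = B -> posq c A -> posq c B ->
  eigenvalue (map_mx toC (invmx A *m B)) mu -> complex.Im mu = 0 /\ 0 < complex.Re mu.
Proof.
move=> c0 AT BT HA HB /eigenvalueP [v vM vn0].
have Au := posq_unit c0 HA.
pose w := v *m map_mx toC (invmx A).
have vw : v = w *m map_mx toC A.
  by rewrite /w -mulmxA -map_mxM mulVmx // map_mx1 mulmx1.
have eq : w *m map_mx toC B = mu *: (w *m map_mx toC A).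
  by rewrite -vw -vM map_mxM mulmxA.
have wn0 : w != 0 by apply: contraNneq vn0 => w0; rewrite vw w0 mul0mx.
clearbody w.
pose X := map_mx (@complex.Re R) w; pose Y := map_mx (@complex.Im R) w.
have E1 : X *m B = complex.Re mu *: (X *m A) - complex.Im mu *: (Y *m A).
  by rewrite /X /Y -!ReMc -ImMc eq ReZ.
have E2 : Y *m B = complex.Re mu *: (Y *m A) + complex.Im mu *: (X *m A).
  by rewrite /X /Y -!ImMc -ReMc eq ImZ.
have qE1 Z : q2 B X Z = complex.Re mu * q2 A X Z - complex.Im mu * q2 A Y Z.
  by rewrite /q2 E1 mulmxBl -!scalemxAl !mxE.
have qE2 Z : q2 B Y Z = complex.Re mu * q2 A Y Z + complex.Im mu * q2 A X Z.
  by rewrite /q2 E2 mulmxDl -!scalemxAl !mxE.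
have nXY : 0 < (X *m X^T) 0 0 + (Y *m Y^T) 0 0.
  have [X0|X0] := eqVneq X 0.
    rewrite X0 mul0mx mxE add0r nq_gt0 //; apply/eqP => Y0; move/eqP: wn0; apply.
    apply/rowP => j; rewrite [RHS]mxE.
    have hR : X 0 j = 0 by rewrite X0 mxE.
    have hI : Y 0 j = 0 by rewrite Y0 mxE.
    rewrite /X /Y !mxE in hR hI.
    by move: hR hI; case: (w 0 j) => a b /= -> ->.
  by rewrite ltr_pwDl ?nq_gt0 ?nq_ge0.
have pA : 0 < q2 A X X + q2 A Y Y.
  apply: (lt_le_trans (_ : 0 < c * ((X *m X^T) 0 0 + (Y *m Y^T) 0 0))).
    exact: mulr_gt0.
  by rewrite mulrDr lerD // ?HA.
have pB : 0 < q2 B X X + q2 B Y Y.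
  apply: (lt_le_trans (_ : 0 < c * ((X *m X^T) 0 0 + (Y *m Y^T) 0 0))).
    exact: mulr_gt0.
  by rewrite mulrDr lerD // ?HB.
have e1 := qE1 Y; have e2 := qE2 X.
rewrite (q2_sym X Y BT) (q2_sym X Y AT) in e1.
have hIm : complex.Im mu * (q2 A X X + q2 A Y Y) = 0.
  by apply/eqP; rewrite -subr_eq0; apply/eqP; move: e1 e2; set s := q2 B Y X => e1 e2; lra.
have Im0 : complex.Im mu = 0.
  by move/eqP: hIm; rewrite mulf_eq0 (gt_eqF pA) orbF => /eqP.
split => //.
have e3 := qE1 X; have e4 := qE2 Y.
rewrite Im0 !mul0r subr0 addr0 in e3 e4.
have : q2 B X X + q2 B Y Y = complex.Re mu * (q2 A X X + q2 A Y Y) by rewrite e3 e4 mulrDr.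
move=> e5; rewrite e5 in pB.
by rewrite -(pmulr_lgt0 _ pA).
Qed.

Lemma det_tr k c (A B : 'M[R]_k) : (0 < k)%N -> 0 < c ->
  A^T = A -> B^T = B -> posq c A -> posq c B ->
  0 < \det (invmx A *m B) /\
  \det (invmx A *m B) <= expR (\tr (invmx A *m B) - k%:R).
Proof.
move=> k0 c0 AT BT HA HB.
have EP := eig_pos c0 AT BT HA HB.
move: EP; set M := invmx A *m B => EP; clearbody M.
have [P Pu Ptrig] := Schur (map_mx toC M) k0.
have Punit := unitarymx_unit Pu.
move: Ptrig; rewrite /similar_to conjumx // => Ptrig.
move: Ptrig; set T := P *m _ *m invmx P => Ptrig.
have Pd : \det P != 0 by rewrite -unitfE -unitmxE.
have detT : \det T = toC (\det M).
  by rewrite /T det_mulmx [\det (P *m _)]det_mulmx det_inv det_map_mx mulrAC mulfV ?mul1r.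
have trT : \tr T = toC (\tr M).
  rewrite /T mxtrace_mulC mulmxA mulVmx // mul1mx.
  by rewrite /mxtrace rmorph_sum; apply: eq_bigr => i _; rewrite mxE.
have eigT i : eigenvalue (map_mx toC M) (T i i).
  have : eigenvalue T (T i i).
    rewrite eigenvalue_root_char char_poly_trig // rootE horner_prod.
    by rewrite (bigD1 i) //= hornerXsubC subrr mul0r.
  case/eigenvalueP => v vT vn0; apply/eigenvalueP; exists (v *m P).
    have TP : T *m P = P *m map_mx toC M by rewrite /T mulmxKV.
    by rewrite -mulmxA -TP mulmxA vT scalemxAl.
  by apply: contraNneq vn0 => vP0; rewrite -(mulmxK Punit v) vP0 mul0mx.
pose mu i := complex.Re (T i i).
have Tii i : T i i = toC (mu i).
  by have [h _] := EP _ (eigT i); rewrite /mu; case: (T i i) h => a b /= ->.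
have mupos i : 0 < mu i by have [_ h] := EP _ (eigT i).
have detM : \det M = \prod_i mu i.
  apply: (@complexI R); rewrite -detT det_trig // rmorph_prod.
  by apply: eq_bigr => i _; exact: Tii.
have trM : \tr M = \sum_i mu i.
  apply: (@complexI R); rewrite -trT /mxtrace rmorph_sum.
  by apply: eq_bigr => i _; exact: Tii.
split; first by rewrite detM; apply: prodr_gt0 => i _.
rewrite detM trM.
apply: (@le_trans _ _ (\prod_i expR (mu i - 1))).
  apply: ler_prod => i _; apply/andP; split; first exact: ltW.
  by have := expR_ge1Dx (mu i - 1); rewrite addrC subrK.
by rewrite -expR_sum sumrB sumr_const card_ord.
Qed.

End Core.

Section An.
Variable R : realType.

Definition Kf (u t : R) : R := (1 - expR (- (u * t))) / u.

Lemma is_derive_Kterm (w u x : R) : u != 0 ->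
  is_derive x 1 (fun s : R => w * Kf u s) (w * expR (- (u * x))).
Proof.
move=> u0; rewrite /Kf; apply: is_derive_eq.
rewrite !(scaler0, add0r, mul1r) /GRing.scale /=.
by field.
Qed.

Lemma Kf0 u : Kf u 0 = 0.
Proof. by rewrite /Kf mulr0 oppr0 expR0 subrr mul0r. Qed.

Lemma Kf_gt0 u t : 0 < u -> 0 < t -> 0 < Kf u t.
Proof.
move=> u0 t0; rewrite /Kf divr_gt0 // subr_gt0 expR_lt1 oppr_lt0.
exact: mulr_gt0.
Qed.

Lemma monoK k (l : 'I_k -> R) (W : 'I_k -> 'I_k -> R) :
  (forall i, 0 < l i) ->
  (forall y : 'I_k -> R, 0 <= \sum_i \sum_j y i * y j * W i j) ->
  forall t, 0 <= t -> 0 <= \sum_i \sum_j W i j * Kf (l i + l j) t.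
Proof.
move=> lpos Wpos t; rewrite le_eqVlt => /orP[/eqP<-|t0].
  by rewrite big1 // => i _; rewrite big1 // => j _; rewrite Kf0 mulr0.
pose h := fun (i j : 'I_k) (s : R) => W i j * Kf (l i + l j) s.
pose f := \sum_(i < k) \sum_(j < k) h i j.
pose df := fun s => \sum_(i < k) \sum_(j < k) W i j * expR (- ((l i + l j) * s)).
have fE s : f s = \sum_i \sum_j W i j * Kf (l i + l j) s.
  rewrite /f fct_sumE; apply: eq_bigr => i _.
  by rewrite fct_sumE.
have der (x : R) : is_derive x (1:R) (f : R -> R) (df x).
  apply: is_derive_sum => i; apply: is_derive_sum => j.
  apply: is_derive_Kterm.
  by rewrite gt_eqF // addr_gt0.
have H := @MVT R f df 0 t t0 (fun x _ => der x).
case: H => [|c _ cE].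
  apply: derivable_within_continuous => x _.
  by case: (der x).
have : 0 <= f t - f 0.
  rewrite cE; apply: mulr_ge0; last by rewrite subr0 ltW.
  have := Wpos (fun i => expR (- (l i * c))).
  rewrite /df; congr (0 <= _); apply: eq_bigr => i _; apply: eq_bigr => j _.
  by rewrite -expRD mulrC mulrDl opprD.
rewrite !fE [X in _ - X]big1 ?subr0 //.
by move=> i _; rewrite big1 // => j _; rewrite Kf0 mulr0.
Qed.

Lemma rank1K k (l : 'I_k -> R) (z : 'I_k -> R) t :
  (forall i, 0 < l i) -> 0 <= t ->
  0 <= \sum_i \sum_j (z i * z j) * Kf (l i + l j) t.
Proof.
move=> lpos t0; apply: monoK => // y.
have -> : \sum_i \sum_j y i * y j * (z i * z j) = (\sum_i y i * z i) ^+ 2.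
  rewrite expr2 mulr_suml; apply: eq_bigr => i _; rewrite mulr_sumr.
  by apply: eq_bigr => j _; ring.
exact: sqr_ge0.
Qed.

Lemma Kf_cs (p q t : R) : 0 < p -> 0 < q -> 0 < t ->
  Kf (p + q) t ^+ 2 <= Kf (p + p) t * Kf (q + q) t.
Proof.
move=> p0 q0 t0.
pose l := fun i : 'I_2 => if val i == 0%N then p else q.
pose z := fun i : 'I_2 => if val i == 0%N then Kf (p + q) t else - Kf (p + p) t.
have := @rank1K 2 l z t _ (ltW t0).
have lpos : forall i, 0 < l i by move=> i; rewrite /l; case: ifP.
move/(_ lpos).
rewrite !big_ord_recl !big_ord0 /= /l /z /=.
rewrite !addr0 (addrC q p).
have Kp := @Kf_gt0 (p + p) t (addr_gt0 p0 p0) t0.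
move=> H.
have : 0 <= Kf (p + p) t * (Kf (p + p) t * Kf (q + q) t - Kf (p + q) t ^+ 2).
  by move: H; congr (0 <= _); ring.
by rewrite pmulr_rge0 // subr_ge0.
Qed.

Lemma qfK k (l : 'I_k -> R) (M : 'M[R]_k) (c : R) (x : 'I_k -> R) t :
  (forall i, 0 < l i) -> 0 <= t ->
  (forall y : 'rV[R]_k, c * (y *m y^T) 0 0 <= (y *m M *m y^T) 0 0) ->
  c * \sum_i x i ^+ 2 * Kf (l i + l i) t <=
  \sum_i \sum_j x i * x j * M i j * Kf (l i + l j) t.
Proof.
move=> lpos t0 HM.
pose W := fun i j : 'I_k => x i * x j * (M i j - c * (i == j)%:R).
have dsum (F : 'I_k -> 'I_k -> R) :
    \sum_i \sum_j F i j * (c * (i == j)%:R) = c * \sum_i F i i.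
  rewrite mulr_sumr; apply: eq_bigr => i _.
  rewrite (bigD1 i) //= big1 ?addr0 => [|j /negbTE]; first by rewrite eqxx mulr1 mulrC.
  by rewrite eq_sym => ->; rewrite mulr0 mulr0.
have Wpos : forall y : 'I_k -> R, 0 <= \sum_i \sum_j y i * y j * W i j.
  move=> y.
  have := HM (\row_i (y i * x i)).
  rewrite qfE nqE -subr_ge0 => H1.
  have -> : \sum_i \sum_j y i * y j * W i j =
     \sum_i \sum_j (y i * x i) * M i j * (y j * x j) -
     \sum_i \sum_j (y i * x i * (y j * x j)) * (c * (i == j)%:R).
    rewrite -sumrB; apply: eq_bigr => i _; rewrite -sumrB; apply: eq_bigr => j _.
    rewrite /W; ring.
  rewrite dsum; move: H1; congr (0 <= _ - c * _).
    apply: eq_bigr => i _; apply: eq_bigr => j _; rewrite !mxE //.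
  apply: eq_bigr => i _; rewrite !mxE expr2 //.
have H := @monoK k l W lpos Wpos t t0.
rewrite -subr_ge0; move: H; congr (0 <= _).
have -> : \sum_i \sum_j W i j * Kf (l i + l j) t =
     \sum_i \sum_j x i * x j * M i j * Kf (l i + l j) t -
     \sum_i \sum_j (x i * x j * Kf (l i + l j) t) * (c * (i == j)%:R).
  rewrite -sumrB; apply: eq_bigr => i _; rewrite -sumrB; apply: eq_bigr => j _.
  rewrite /W; ring.
rewrite dsum; congr (_ - c * _).
Qed.

End An.

Section Main.
Variable R : realType.

Lemma final_ineq (r th : R) : 0 < r -> 0 <= th -> r <= expR th -> r^-1 <= expR th ->
  `|r - 1| <= th * expR th.
Proof.
move=> r0 th0 rE riE.
set E := expR th in rE riE *.
have E0 : 0 < E by rewrite /E expR_gt0.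
have E1 : 1 + th <= E by exact: expR_ge1Dx.
have hN : 1 - th <= E^-1 by rewrite /E -expRN; exact: expR_ge1Dx.
have EE : E * E^-1 = 1 by rewrite mulfV // gt_eqF.
have Ei0 : 0 < E^-1 by rewrite invr_gt0.
have rEi : 1 <= r * E.
  by rewrite -(ler_pM2l r0) in riE; rewrite mulfV ?gt_eqF // in riE.
have h1 : E * (1 - th) <= 1 by rewrite -[X in _ <= X]EE ler_pM2l.
have h2 : E^-1 <= r.
  have : E^-1 * 1 <= E^-1 * (r * E) by rewrite ler_pM2l.
  by rewrite mulr1 mulrC -mulrA EE mulr1.
rewrite ler_norml; apply/andP; split.
  have : th <= th * E by rewrite ler_peMr //; lra.
  lra.
nra.
Qed.

Lemma invmx_diag k (d : 'rV[R]_k) : (forall i, d 0 i != 0) ->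
  invmx (diag_mx d) = diag_mx (\row_i (d 0 i)^-1).
Proof.
move=> dn0.
have DD : diag_mx d *m diag_mx (\row_i (d 0 i)^-1) = 1%:M.
  apply/matrixP => i j; rewrite mul_diag_mx !mxE.
  by case: (eqVneq i j) => [->|_]; rewrite ?mulr1n ?mulr0n ?mulr0 // mulfV.
have [Du _] := mulmx1_unit DD.
by rewrite -[RHS](mulKmx Du) DD mulmx1.
Qed.

Lemma sum_norm_s m (c : 'M[R]_m) : \sum_i \sum_j `|c i j| <= m%:R * norm_s c.
Proof.
rewrite mulr_natl -[X in _ *+ X]card_ord -sumr_const; apply: ler_sum => i _.
apply: le_trans (le_bigmax 0 (fun i => \sum_j `|c i j|) i) _.
by rewrite /norm_s le_max lexx.
Qed.

Lemma loewner_posq m (c : R) (M : 'M[R]_m) : loewner_le (c%:M) M -> posq c M.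
Proof.
move=> H y; have := H y.
rewrite mulmxBr mul_mx_scalar mulmxBl -scalemxAl [X in 0 <= X]mxE.
by rewrite [X in 0 <= _ + X]mxE [X in 0 <= _ - X]mxE subr_ge0.
Qed.

Section Tilde.
Variables (m : nat) (lam : 'I_m -> R) (t : R).
Hypothesis lampos : forall i, 0 < lam i.
Hypothesis t0 : 0 < t.
Let g i := Kf (lam i + lam i) t.
Let s i := Num.sqrt (g i)^-1.
Let rho i j := Kf (lam i + lam j) t * (s i * s j).

Lemma g_gt0 i : 0 < g i.
Proof. exact: Kf_gt0 (addr_gt0 (lampos i) (lampos i)) t0. Qed.

Lemma gtE : g_t lam t = diag_mx (\row_i g i).
Proof.
rewrite /g_t; congr diag_mx; apply/rowP => i; rewrite !mxE /g /Kf.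
by rewrite (_ : 2 * lam i = lam i + lam i) //; ring.
Qed.

Lemma Gsqrt : G_t_sqrt lam t = diag_mx (\row_i s i).
Proof.
rewrite /G_t_sqrt /G_t gtE invmx_diag; last by move=> i; rewrite mxE gt_eqF // g_gt0.
by congr diag_mx; apply/rowP => i; rewrite !mxE eqxx mulr1n.
Qed.

Lemma tildeE (c : 'M[R]_m) i j : mx_tilde lam c t i j = c i j * rho i j.
Proof. by rewrite /mx_tilde Gsqrt mul_diag_mx mul_mx_diag !mxE /rho /Kf; ring. Qed.

Lemma s2g i : s i ^+ 2 * g i = 1.
Proof.
by rewrite /s sqr_sqrtr ?invr_ge0 ?ltW ?g_gt0 // mulVf // gt_eqF // g_gt0.
Qed.

Lemma rho_sym i j : rho i j = rho j i.
Proof. by rewrite /rho addrC [s i * _]mulrC. Qed.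

Lemma rho_le1 i j : `|rho i j| <= 1.
Proof.
have h : rho i j ^+ 2 <= 1 ^+ 2.
  rewrite expr1n /rho exprMn [(s i * s j) ^+ 2]exprMn.
  have hs : s i ^+ 2 * s j ^+ 2 = (g i * g j)^-1.
    by rewrite /s !sqr_sqrtr ?invr_ge0 ?ltW ?g_gt0 // [RHS]invfM.
  rewrite hs ler_pdivrMr ?mul1r; first exact: Kf_cs.
  exact: mulr_gt0 (g_gt0 i) (g_gt0 j).
by move: h; rewrite -ler_sqrt ?sqrtr_sqr ?normr1 // sqr_ge0.
Qed.

Lemma tilde_posq c (M : 'M[R]_m) : posq c M -> posq c (mx_tilde lam M t).
Proof.
move=> HM y; rewrite qfE nqE.
have -> : \sum_i \sum_j y 0 i * mx_tilde lam M t i j * y 0 j =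
   \sum_i \sum_j (y 0 i * s i) * (y 0 j * s j) * M i j * Kf (lam i + lam j) t.
  by apply: eq_bigr => i _; apply: eq_bigr => j _; rewrite tildeE /rho; ring.
have -> : \sum_i y 0 i ^+ 2 = \sum_i (y 0 i * s i) ^+ 2 * Kf (lam i + lam i) t.
  apply: eq_bigr => i _; rewrite -[LHS]mulr1 -(s2g i) /g; ring.
exact: (@qfK R m lam M c (fun i => y 0 i * s i) t lampos (ltW t0) HM).
Qed.

Lemma tilde_sym (M : 'M[R]_m) : M^T = M -> (mx_tilde lam M t)^T = mx_tilde lam M t.
Proof.
move=> MT; apply/matrixP => i j; rewrite mxE !tildeE rho_sym; congr (_ * _).
by rewrite -[in RHS]MT mxE.
Qed.

Lemma tilde_diff (a b : 'M[R]_m) i j :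
  `|(mx_tilde lam b t - mx_tilde lam a t) i j| <= `|(a - b) i j|.
Proof.
have -> : (mx_tilde lam b t - mx_tilde lam a t) i j =
  mx_tilde lam b t i j - mx_tilde lam a t i j.
  by rewrite [LHS]mxE [X in _ + X]mxE.
have -> : (a - b) i j = a i j - b i j by rewrite [LHS]mxE [X in _ + X]mxE.
rewrite !tildeE -mulrBl normrM distrC ler_piMr //.
exact: rho_le1.
Qed.

End Tilde.

End Main.

Theorem lemma4p6 (R : realType) (m : nat) (lam : 'I_m -> R)
  (L0 L1 : R) (a b : 'M[R]_m) :
  (0 < m)%N ->
  (forall i, 0 < lam i) ->
  (forall i j : 'I_m, (i <= j)%N -> lam i <= lam j) ->
  0 < L0 -> L0 <= L1 ->
  a^T = a -> b^T = b ->
  loewner_le (L0%:M) a -> loewner_le a (L1%:M) ->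
  loewner_le (L0%:M) b -> loewner_le b (L1%:M) ->
  let theta := L0^-1 * m%:R * norm_s (a - b) in
  forall t : R, 0 < t ->
    `| \det (mx_tilde lam b t) / \det (mx_tilde lam a t) - 1 | <= theta * expR theta.
Proof.
move=> m0 lampos _ L00 _ aT bT la _ lb _ theta t t0.
have hA := tilde_posq lampos t0 (loewner_posq la).
have hB := tilde_posq lampos t0 (loewner_posq lb).
have AT := tilde_sym lampos t0 aT.
have BT := tilde_sym lampos t0 bT.
move: hA hB AT BT.
set A := mx_tilde lam a t; set B := mx_tilde lam b t => hA hB AT BT.
have hdiff i j : `|(B - A) i j| <= `|(a - b) i j| := tilde_diff lampos t0 a b i j.
clearbody A B.
set th' := L0^-1 * \sum_i \sum_j `|(B - A) i j|.
have th'le : th' <= theta.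
  rewrite /theta -mulrA; apply: ler_wpM2l; first by rewrite invr_ge0 ltW.
  apply: (le_trans _ (sum_norm_s (a - b))); apply: ler_sum => i _; apply: ler_sum => j _.
  exact: hdiff.
have th'0 : 0 <= th'.
  apply: mulr_ge0; first by rewrite invr_ge0 ltW.
  by apply: sumr_ge0 => i _; apply: sumr_ge0.
have th'2 : L0^-1 * \sum_i \sum_j `|(A - B) i j| = th'.
  rewrite /th' -opprB; congr (_ * _); apply: eq_bigr => i _; apply: eq_bigr => j _.
  by rewrite mxE normrN.
have [rpos rle] := det_tr m0 L00 AT BT hA hB.
have [_ rle'] := det_tr m0 L00 BT AT hB hA.
have Au := posq_unit L00 hA.
have Bu := posq_unit L00 hB.
have rE : \det (invmx A *m B) = \det B / \det A by rewrite det_mulmx det_inv mulrC.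
have rE' : \det (invmx B *m A) = (\det B / \det A)^-1.
  by rewrite det_mulmx det_inv invfM invrK.
have tr1 : \tr (invmx A *m B) - m%:R = \tr (invmx A *m (B - A)).
  by rewrite mulmxBr mulVmx // raddfB /= mxtrace1.
have tr2 : \tr (invmx B *m A) - m%:R = \tr (invmx B *m (A - B)).
  by rewrite mulmxBr mulVmx // raddfB /= mxtrace1.
have trb1 := trace_bound (B - A) L00 hA.
have trb2 := trace_bound (A - B) L00 hB.
rewrite th'2 in trb2.
apply: final_ineq.
- by rewrite -rE.
- exact: le_trans th'0 th'le.
- rewrite -rE; apply: (le_trans rle); rewrite ler_expR tr1.
  exact: le_trans (ler_norm _) (le_trans trb1 th'le).
- rewrite -rE'; apply: (le_trans rle'); rewrite ler_expR tr2.
  exact: le_trans (ler_norm _) (le_trans trb2 th'le).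
Qed.
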